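(* Let $G=(V,E,\gamma,c)$ be a typed DAG task with $M_s\ge1$ cores of each type $s\in S$. Let $u\in V$, let $\pi_1$ and $\pi_2$ be two paths of $G$ both ending at $u$, and let $v$ be a successor of $u$; let $\pi_1'$, $\pi_2'$ be the paths obtained by appending $v$ to $\pi_1$, $\pi_2$ respectively. If $\langle u,\Delta_{\pi_1}(u),\mathcal{R}_{\pi_1}(u)\rangle\succcurlyeq\langle u,\Delta_{\pi_2}(u),\mathcal{R}_{\pi_2}(u)\rangle$, then $\langle v,\Delta_{\pi_1'}(v),\mathcal{R}_{\pi_1'}(v)\rangle\succcurlyeq\langle v,\Delta_{\pi_2'}(v),\mathcal{R}_{\pi_2'}(v)\rangle$.
   Context: A typed DAG task is $G=(V,E,\gamma,c)$ where $(V,E)$ is a finite directed acyclic graph with a unique source and a unique sink, $S$ is a finite set of core types, $\gamma:V\to S$ gives the type of each vertex, and $c:V\to\mathbb{R}_{\ge0}$ gives the WCET of each vertex. $\mathrm{ans}(u)$, $\mathrm{des}(u)$ denote ancestors and descendants of $u$. For $w\in V$, $\mathrm{par}(w)=\{x\in V: x\ne w,\ \gamma(x)=\gamma(w),\ x\notin \mathrm{ans}(w)\cup\mathrm{des}(w)\}$, and $\mathrm{par}(\bot)=\emptyset$. For a path $\pi=(\tau_1,\dots,\tau_k)$ and $s\in S$: $\delta_\pi(\tau_i,s)=\tau_i$ if $\gamma(\tau_i)=s$; $\delta_\pi(\tau_1,s)=\bot$ if $\gamma(\tau_1)\ne s$; $\delta_\pi(\tau_i,s)=\delta_\pi(\tau_{i-1},s)$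 if $\gamma(\tau_i)\ne s$, $i\ge2$. $\Delta_\pi(\tau_i)=(\delta_\pi(\tau_i,s))_{s\in S}$. For $i\ge2$, $\varphi_\pi(\tau_i)=\mathrm{par}(\tau_i)\setminus\mathrm{par}(\delta_\pi(\tau_{i-1},\gamma(\tau_i)))$; $\mathcal{R}_\pi(\tau_1)=c(\tau_1)$ and $\mathcal{R}_\pi(\tau_i)=\mathcal{R}_\pi(\tau_{i-1})+c(\tau_i)+\sum_{x\in\varphi_\pi(\tau_i)}c(x)/M_{\gamma(\tau_i)}$ for $i\ge2$. For a path $\pi$ ending at $u$, its tuple is $\langle u,\Delta_\pi(u),\mathcal{R}_\pi(u)\rangle$. Domination: $\langle w,\Delta_1,\mathcal{R}_1\rangle\succcurlyeq\langle w,\Delta_2,\mathcal{R}_2\rangle$ (same vertex $w$, with $\Delta_j=(\delta_j(w,s))_{s\in S}$) iff (1) $\mathcal{R}_1\ge\mathcal{R}_2$, and (2) for every $s\in S$, either $\delta_1(w,s)=\bot$, or $\delta_1(w,s)\ne\bot$, $\delta_2(w,s)\ne\bot$ and $\mathrm{par}(\delta_1(w,s))\cap\mathrm{des}(\delta_2(w,s))=\emptyset$. *)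

(* Defs.v *)
From HB Require Import structures.
From mathcomp Require Import all_boot all_order all_algebra.
Set Implicit Arguments. Unset Strict Implicit. Unset Printing Implicit Defensive.
Import Order.TTheory GRing.Theory Num.Theory.
Local Open Scope ring_scope.

(* Typed DAG tasks G = (V, E, gamma, c): V a finType, E : rel V the edge
   relation, gamma : V -> S the core type, c : V -> R the WCET.
   Vertex bottom (⊥) is encoded by [None : option V]. *)

Definition des (V : finType) (E : rel V) (x y : V) : bool :=
  [exists z, E x z && connect E z y].

(* x \in ans(w) iff des E x w *)

Definition typed_dag_task (R : realFieldType) (V S : finType) (E : rel V)
  (gamma : V -> S) (c : V -> R) : Prop :=
  [/\ (forall x, ~~ des E x x),
      (exists! x, [forall y, ~~ E y x]),
      (exists! x, [forall y, ~~ E x y])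
    & (forall x, 0 <= c x)].

Definition par (V S : finType) (E : rel V) (gamma : V -> S) (w : V) : {set V} :=
  [set x | [&& x != w, gamma x == gamma w, ~~ des E x w & ~~ des E w x]].

Definition par_opt (V S : finType) (E : rel V) (gamma : V -> S)
  (o : option V) : {set V} :=
  if o is Some w then par E gamma w else set0.

Definition is_path (V : finType) (E : rel V) (pi : seq V) : bool :=
  if pi is x :: p then path E x p else false.

Definition ends_at (V : finType) (pi : seq V) (u : V) : bool :=
  if pi is x :: p then last x p == u else false.

(* delta_pi(tau_k, s) for the path pi = (tau_1, ..., tau_k): the last vertex of
   type s among tau_1..tau_k, or ⊥ (None) if there is none. *)
Definition delta (V S : finType) (gamma : V -> S) (pi : seq V) (s : S)
  : option V :=
  foldl (fun acc x => if gamma x == s then Some x else acc) None pi.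

Definition Delta (V S : finType) (gamma : V -> S) (pi : seq V) : S -> option V :=
  fun s => delta gamma pi s.

(* phi_pi(tau_i) = par(tau_i) \ par(delta_pi(tau_{i-1}, gamma tau_i)),
   where prefix = (tau_1, ..., tau_{i-1}). *)
Definition phi (V S : finType) (E : rel V) (gamma : V -> S)
  (prefix : seq V) (x : V) : {set V} :=
  par E gamma x :\: par_opt E gamma (delta gamma prefix (gamma x)).

(* R on the reversed path (last vertex first). *)
Fixpoint Rrev (R : realFieldType) (V S : finType) (E : rel V)
  (gamma : V -> S) (c : V -> R) (M : S -> nat) (r : seq V) : R :=
  match r with
  | [::] => 0
  | x :: r' =>
      if r' is [::] then c x
      else Rrev E gamma c M r' + c x
           + \sum_(y in phi E gamma (rev r') x) c y / (M (gamma x))%:R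
  end.

Definition Rpath (R : realFieldType) (V S : finType) (E : rel V)
  (gamma : V -> S) (c : V -> R) (M : S -> nat) (pi : seq V) : R :=
  Rrev E gamma c M (rev pi).

Definition path_tuple (R : realFieldType) (V S : finType) (E : rel V)
  (gamma : V -> S) (c : V -> R) (M : S -> nat) (u : V) (pi : seq V)
  : V * (S -> option V) * R :=
  (u, Delta gamma pi, Rpath E gamma c M pi).

Definition dominates (R : realFieldType) (V S : finType) (E : rel V)
  (gamma : V -> S) (t1 t2 : V * (S -> option V) * R) : Prop :=
  let: (w1, D1, R1) := t1 in
  let: (w2, D2, R2) := t2 in
  [/\ w1 = w2, R2 <= R1 &
      forall s : S,
        match D1 s with
        | None => True
        | Some d1 =>
            match D2 s with
            | None => False
            | Some d2 => is_true [disjoint par E gamma d1 & [set y | des E d2 y]]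
            end
        end].

(* Main.v *)
Require Import Defs.
From HB Require Import structures.
From mathcomp Require Import all_boot all_order all_algebra.
Import Order.TTheory GRing.Theory Num.Theory.
Local Open Scope ring_scope.

Lemma sum_subset_le (R : realFieldType) (V : finType) (A B : {set V}) (f : V -> R) :
  A \subset B -> (forall x, 0 <= f x) -> \sum_(y in A) f y <= \sum_(y in B) f y.
Proof.
move=> sAB f0; rewrite [X in _ <= X](big_setID A) /= (setIidPr sAB) lerDl.
by apply: sumr_ge0.
Qed.

Lemma delta_in (V S : finType) (gamma : V -> S) pi s b :
  delta gamma pi s = Some b -> b \in pi /\ gamma b = s.
Proof.
rewrite /delta.
suff H : forall acc, foldl (fun acc x => if gamma x == s then Some x else acc) acc pi = Some b ->
  acc = Some b \/ (b \in pi /\ gamma b = s).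
  by move=> /(H None) [|].
elim: pi => [|x p IH] acc /=; first by left.
move/IH => [|[bp gb]]; last by right; rewrite in_cons bp orbT.
case: eqP => [gx [<-]|_ ->]; last by left.
by right; rewrite mem_head.
Qed.

Arguments delta_in {V S gamma pi s b}.

Lemma path_last_connect (V : finType) (E : rel V) x p :
  path E x p -> forall y, y \in x :: p -> connect E y (last x p).
Proof.
elim: p x => [|z p IH] x /=.
  by move=> _ y; rewrite inE => /eqP ->.
case/andP=> Exz pz y; rewrite in_cons => /orP [/eqP ->|yin].
  by apply: connect_trans (connect1 Exz) (IH _ pz _ (mem_head _ _)).
exact: IH.
Qed.

Lemma connect_des (V : finType) (E : rel V) b u v :
  connect E b u -> E u v -> des E b v.
Proof.
case/connectP => [[|z p]] /= => [_ -> Euv|].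
  by apply/existsP; exists v; rewrite Euv connect0.
case/andP=> Ebz pz -> Euv; apply/existsP; exists z; rewrite Ebz /=.
apply: connect_trans (connect1 Euv); apply/connectP; by exists p.
Qed.

Lemma des_trans (V : finType) (E : rel V) x b v :
  des E x b -> des E b v -> des E x v.
Proof.
case/existsP=> z /andP [Exz czb] /existsP [w /andP [Ebw cwv]].
apply/existsP; exists z; rewrite Exz /=.
exact: connect_trans czb (connect_trans (connect1 Ebw) cwv).
Qed.

Arguments des_trans {V E x b v}.
Arguments connect_des {V E b u v}.

Lemma delta_rcons (V S : finType) (gamma : V -> S) pi v s :
  delta gamma (rcons pi v) s = if gamma v == s then Some v else delta gamma pi s.
Proof. by rewrite /delta foldl_rcons. Qed.

Lemma Rpath_rcons (R : realFieldType) (V S : finType) (E : rel V)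
  (gamma : V -> S) (c : V -> R) (M : S -> nat) pi v : pi != [::] ->
  Rpath E gamma c M (rcons pi v) = Rpath E gamma c M pi + c v +
     \sum_(y in phi E gamma pi v) c y / (M (gamma v))%:R.
Proof.
rewrite /Rpath rev_rcons /=; case E1: (rev pi) => [|a l].
  by move: E1 => /(f_equal size); rewrite size_rev; case: pi.
by rewrite -E1 revK.
Qed.

Theorem lemma4 (R : realFieldType) (V S : finType) (E : rel V)
  (gamma : V -> S) (c : V -> R) (M : S -> nat) :
  typed_dag_task E gamma c ->
  (forall s : S, (1 <= M s)%N) ->
  forall (u v : V) (pi1 pi2 : seq V),
    is_path E pi1 -> is_path E pi2 ->
    ends_at pi1 u -> ends_at pi2 u ->
    E u v ->
    dominates E gamma (path_tuple E gamma c M u pi1)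
                      (path_tuple E gamma c M u pi2) ->
    dominates E gamma (path_tuple E gamma c M v (rcons pi1 v))
                      (path_tuple E gamma c M v (rcons pi2 v)).
Proof.
case=> _ _ _ c0 _ u v pi1 pi2 p1 p2 e1 e2 Euv.
rewrite /dominates /path_tuple /Delta => -[_ R21 Hs].
have ne1 : pi1 != [::] by case: (pi1) e1.
have ne2 : pi2 != [::] by case: (pi2) e2.
split=> //.
  rewrite !Rpath_rcons //; apply: lerD; first by rewrite lerD2r.
  apply: sum_subset_le; last first.
    by move=> y; apply: divr_ge0 => //; rewrite ler0n.
  apply/subsetP => x; rewrite /phi !inE => /andP [nx xv]; rewrite xv andbT.
  move: nx; apply: contra => xd1.
  move: (Hs (gamma v)) xd1.
  case D1: (delta gamma pi1 (gamma v)) => [a|] /=; last by rewrite inE.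
  case D2: (delta gamma pi2 (gamma v)) => [b|] //= disj xa.
  have [bin _] := delta_in D2.
  have dbv : des E b v.
    case: (pi2) p2 e2 bin => // y p /= py /eqP ey bin.
    apply: connect_des Euv; rewrite -ey; exact: path_last_connect py _ bin.
  move: xv; rewrite /par !inE => /and4P [xnv gxv nxv nvx].
  have [bin' gb] := delta_in D2.
  rewrite gb gxv /=; apply/and3P; split.
  - by apply/eqP => xb; move: nxv; rewrite xb dbv.
  - by apply/negP => dxb; move: nxv; rewrite (des_trans dxb dbv).
  - by apply/negP => dbx; have := disjointFr disj xa; rewrite inE dbx.
move=> s; rewrite !delta_rcons; case: eqP => [_|_]; last exact: Hs.
rewrite disjoint_subset; apply/subsetP => x; rewrite /par !inE => /and4P [_ _ _ nvx].
by [].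
Qed.
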